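(* Let $T$ be a tree on $n$ vertices. If there is a leaf $v$ of $T$ with $|N_2(v)|\le\lceil n/2\rceil-4$, then $\operatorname{diam}(\mathcal{C}_3(T))\ge\lfloor 3n/2\rfloor+1$.
   Context: For a vertex $v$ of a tree, $N_i(v)$ is the set of vertices at distance exactly $i$ from $v$. A proper 3-coloring of a tree $T=(V,E)$ is a map $f\colon V\to\mathbb{Z}/3\mathbb{Z}$ with $f(u)\neq f(v)$ for every edge $uv\in E$. The 3-coloring graph $\mathcal{C}_3(T)$ has the proper 3-colorings as vertices, two colorings adjacent iff they differ at exactly one vertex; $\operatorname{diam}$ denotes graph diameter. *)

(* Defs.v *)
From mathcomp Require Import all_boot.
Set Implicit Arguments. Unset Strict Implicit. Unset Printing Implicit Defensive.

Definition simple_graph (V : finType) (e : rel V) : Prop :=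
  symmetric e /\ irreflexive e.

Fixpoint walk_len (V : finType) (e : rel V) (k : nat) (x y : V) : bool :=
  match k with
  | 0 => x == y
  | k'.+1 => [exists z, e x z && walk_len e k' z y]
  end.

Definition at_dist (V : finType) (e : rel V) (x y : V) (k : nat) : bool :=
  walk_len e k x y && [forall j : 'I_k, ~~ walk_len e j x y].

(* A tree: a connected simple graph with exactly n-1 (unordered) edges,
   i.e. 2(n-1) ordered adjacent pairs. *)
Definition is_tree (V : finType) (e : rel V) : Prop :=
  simple_graph e /\ (forall x y : V, connect e x y) /\
  #|[set p : V * V | e p.1 p.2]| = 2 * (#|V| - 1).

Definition Nbhd (V : finType) (e : rel V) (i : nat) (v : V) : {set V} :=
  [set u | at_dist e v u i].

Definition is_leaf (V : finType) (e : rel V) (v : V) : bool :=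
  #|[set u | e v u]| == 1.

Definition coloring (V : finType) := {ffun V -> 'I_3}.

Definition proper3 (V : finType) (e : rel V) (f : coloring V) : bool :=
  [forall x, forall y, e x y ==> (f x != f y)].

Definition col_adj (V : finType) (e : rel V) : rel (coloring V) :=
  fun f g => [&& proper3 e f, proper3 e g & #|[set x | f x != g x]| == 1].

(* diam(G) >= k  (diameter = sup of pairwise distances, +oo if disconnected):
   some two vertices of G are at no walk-distance < k. *)
Definition diam_ge (W : finType) (P : W -> bool) (r : rel W) (k : nat) : Prop :=
  exists f g, P f /\ P g /\ forall j, j < k -> ~~ walk_len r j f g.

(* Main.v *)
Require Import Defs.
From mathcomp Require Import all_boot all_algebra zify.
Set Implicit Arguments. Unset Strict Implicit. Unset Printing Implicit Defensive.
Import GRing.Theory Num.Theory.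
Lemma walk_snoc (V : finType) (e : rel V) k x y z :
  walk_len e k x y -> e y z -> walk_len e k.+1 x z.
Proof.
elim: k x => [|k IH] x /=.
  move=> /eqP -> Hyz; apply/existsP; exists z; by rewrite Hyz eqxx.
case/existsP=> w /andP[Hxw Hw] Hyz; apply/existsP; exists w; rewrite Hxw /=; exact: IH Hw Hyz.
Qed.

Lemma walk_last (V : finType) (e : rel V) k x z :
  walk_len e k.+1 x z -> exists y, walk_len e k x y && e y z.
Proof.
elim: k x => [|k IH] x /=.
  case/existsP=> w /andP[Hxw /eqP <-]; exists x; by rewrite eqxx.
case/existsP=> w /andP[Hxw Hw]; case: (IH _ Hw) => y /andP[Hwy Hyz].
exists y; rewrite Hyz andbT; apply/existsP; exists w; by rewrite Hxw.
Qed.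

Lemma connect_walk (V : finType) (e : rel V) x y : connect e x y -> exists k, walk_len e k x y.
Proof.
case/connectP=> p; elim: p x => [|z p IH] x /=.
  move=> _ ->; exists 0; exact: eqxx.
case/andP=> Hxz Hp Hy; case: (IH _ Hp Hy) => k Hk; exists k.+1; apply/existsP; exists z; by rewrite Hxz.
Qed.

Lemma dist_exists (V : finType) (e : rel V) (v : V) :
  (forall x, connect e v x) ->
  exists d : V -> nat, (forall x, walk_len e (d x) v x) /\
     (forall x k, walk_len e k v x -> d x <= k).
Proof.
move=> hc.
exists (fun x => ex_minn (connect_walk (hc x))); split=> x.
  by case: ex_minnP.
move=> k Hk; case: ex_minnP => m _; exact.
Qed.

Lemma d0 (V : finType) (e : rel V) (v : V) (d : V -> nat) :
  (forall x, walk_len e (d x) v x) -> (forall x k, walk_len e k v x -> d x <= k) ->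
  forall x, (d x == 0) = (x == v).
Proof.
move=> Hw Hm x; apply/eqP/eqP => [H|->].
  by have := Hw x; rewrite H /= eq_sym => /eqP.
by apply/eqP; rewrite -leqn0; apply: Hm; rewrite /= eqxx.
Qed.

Lemma d_edge (V : finType) (e : rel V) (v : V) (d : V -> nat) :
  (forall x, walk_len e (d x) v x) -> (forall x k, walk_len e k v x -> d x <= k) ->
  forall x y, e x y -> d y <= (d x).+1.
Proof. move=> Hw Hm x y Hxy; apply: Hm; exact: walk_snoc (Hw x) Hxy. Qed.

Lemma d_parent (V : finType) (e : rel V) (v : V) (d : V -> nat) :
  (forall x, walk_len e (d x) v x) -> (forall x k, walk_len e k v x -> d x <= k) ->
  forall x, x != v -> exists p, e p x && (d x == (d p).+1).
Proof.
move=> Hw Hm x Hx.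
have Hd : d x != 0 by rewrite (d0 Hw Hm).
have := Hw x; case E: (d x) Hd => [|k] // _.
case/walk_last=> p /andP[Hp Hpx]; exists p; rewrite Hpx /=.
have h1 := Hm _ _ Hp; have h2 := d_edge Hw Hm Hpx; rewrite E in h2.
apply/eqP; lia.
Qed.

Lemma tree_bip (V : finType) (e : rel V) (v : V) (d : V -> nat) :
  is_tree e ->
  (forall x, walk_len e (d x) v x) -> (forall x k, walk_len e k v x -> d x <= k) ->
  forall x y, e x y -> d y = (d x).+1 \/ d x = (d y).+1.
Proof.
move=> [[Hsym Hirr] [Hc Hcard]] Hw Hm.
pose par x := odflt x [pick p | e p x && (d x == (d p).+1)].
have Hpar : forall x, x != v -> e (par x) x && (d x == (d (par x)).+1).
  move=> x Hx; rewrite /par; case: pickP => [p Hp //|H].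
  by case: (d_parent Hw Hm Hx) => p; rewrite H.
pose P1 := [set (x, par x) | x in [set~ v]].
pose P2 := [set (par x, x) | x in [set~ v]].
have c1 : #|P1| = #|V|.-1.
  rewrite card_in_imset ?cardsC1 // => x y _ _ [] //.
have c2 : #|P2| = #|V|.-1.
  rewrite card_in_imset ?cardsC1 // => x y _ _ [] //.
have dis : [disjoint P1 & P2].
  apply/pred0P => q /=; apply/negbTE/negP => /andP[/imsetP[x Hx ->] /imsetP[y Hy [Ex Ey]]].
  rewrite !in_setC1 in Hx Hy.
  have := Hpar _ Hx; have := Hpar _ Hy; rewrite -Ex -Ey => /andP[_ /eqP A] /andP[_ /eqP B]; lia.
set E := [set p : V * V | e p.1 p.2] in Hcard.
have sub : P1 :|: P2 \subset E.
  apply/subsetP => q; rewrite in_setU inE => /orP[] /imsetP[x Hx ->] /=;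
  rewrite in_setC1 in Hx; have /andP[H _] := Hpar _ Hx => //; by rewrite Hsym.
have eqE : P1 :|: P2 = E.
  apply/eqP; rewrite eqEcard sub /= Hcard.
  rewrite cardsU.
  have -> : P1 :&: P2 = set0 by apply/setP=> q; rewrite inE; move/pred0P: dis => /(_ q) /= ->; rewrite inE.
  rewrite cards0 c1 c2; lia.
move=> x y Hxy.
have : (x, y) \in E by rewrite inE.
rewrite -eqE in_setU => /orP[] /imsetP[z Hz [Ex Ey]]; rewrite in_setC1 in Hz;
  have /andP[_ /eqP H] := Hpar _ Hz; subst; [right|left] => //.
Qed.
Local Open Scope int_scope.
Definition Lift (V : finType) (e : rel V) (f : coloring V) (h : V -> int) : Prop :=
  (forall y, exists q : int, h y = ((f y : nat) : int) + 3 * q)%R /\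
  (forall x y, e x y -> (h x - h y = 1 \/ h y - h x = 1)%R).

Lemma lift_nat (V : finType) (e : rel V) (hn : V -> nat) :
  (forall x y, e x y -> hn y = (hn x).+1 \/ hn x = (hn y).+1) ->
  Lift e [ffun y => inord (hn y %% 3)] (fun y => (hn y)%:Z).
Proof.
move=> H; split.
  move=> y; exists (hn y %/ 3)%:Z; rewrite ffunE inordK; last by rewrite ltn_pmod.
  lia.
move=> x y /H; lia.
Qed.

Lemma lift_proper (V : finType) (e : rel V) f h : Lift e f h -> proper3 e f.
Proof.
move=> [Hq He]; apply/forallP => x; apply/forallP => y; apply/implyP => Hxy.
have [a Ha] := Hq x; have [b Hb] := Hq y; have := He _ _ Hxy.
apply: contraPN => /eqP Eq.
have : (f x : nat) = f y by rewrite Eq.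
lia.
Qed.

Lemma lift_step (V : finType) (e : rel V) f f' h :
  simple_graph e -> col_adj e f f' -> Lift e f h ->
  exists h', Lift e f' h' /\ (\sum_y absz (h' y - h y) = 2)%N /\
     (forall y, exists q : int, h' y - h y = 2 * q)%R.
Proof.
move=> [Hsym Hirr] /and3P[Pf Pf' /cards1P[x Hx]] [Hq He].
have Heq : forall y, y != x -> f' y = f y.
  move=> y Hy; apply/eqP; apply: contraR Hy => Hne.
  have : y \in [set z | f z != f' z] by rewrite inE eq_sym.
  by rewrite Hx inE.
have Hneq : f x != f' x.
  have : x \in [set z | f z != f' z] by rewrite Hx inE.
  by rewrite inE.
pose t : int := if ((f' x : nat) == (f x).+1) || ((f x == 2%N :> nat) && (f' x == 0%N :> nat)) then (-2)%R else 2%R.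
pose h' := fun y => if y == x then (h x + t)%R else h y.
have prop : forall a b, e a b -> f' a != f' b.
  move=> a b Hab; move/forallP: Pf' => /(_ a) /forallP /(_ b); by rewrite Hab.
have propf : forall a b, e a b -> f a != f b.
  move=> a b Hab; move/forallP: Pf => /(_ a) /forallP /(_ b); by rewrite Hab.
have key : forall w, e x w -> (h' x - h w = 1 \/ h w - h' x = 1)%R.
  move=> w Hxw.
  have Hwx : w != x by apply: contraTneq Hxw => ->; rewrite Hirr.
  have A1 := prop _ _ Hxw; rewrite (Heq _ Hwx) in A1.
  have A2 := propf _ _ Hxw.
  have [a Ha] := Hq x; have [b Hb] := Hq w; have := He _ _ Hxw.
  have l1 := ltn_ord (f x); have l2 := ltn_ord (f' x); have l3 := ltn_ord (f w).
  move: A1 A2 Hneq; rewrite /h' eqxx /t -!val_eqE /=.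
  case: ifP => /= C; lia.
exists h'; split; [split|split].
- move=> y; rewrite /h'; case: eqP => [->|/eqP Hy].
    have [a Ha] := Hq x; rewrite Ha /t.
    move: Hneq (ltn_ord (f x)) (ltn_ord (f' x)); rewrite -val_eqE /=.
    case: (f x : nat) => [|[|[|?]]]; case: (f' x : nat) => [|[|[|?]]] //= *;
      [exists (a-1)%R|exists a|exists (a+1)%R|exists (a-1)%R|exists a|exists (a+1)%R]; lia.
  rewrite Heq //; exact: Hq.
- move=> a b Hab.
  case: (eqVneq a x) => [Ea|Na]; case: (eqVneq b x) => [Eb|Nb].
  + by subst; rewrite Hirr in Hab.
  + subst a; have := key _ Hab; rewrite /h' (negbTE Nb); done.
  + subst b; rewrite Hsym in Hab; have := key _ Hab; rewrite /h' (negbTE Na); lia.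
  + rewrite /h' (negbTE Na) (negbTE Nb); exact: He.
- rewrite (bigD1 x) //= big1 => [|y Hy]; last by rewrite /h' (negbTE Hy) subrr.
  rewrite /h' eqxx addn0 /t; case: ifP => _; lia.
- move=> y; rewrite /h'; case: eqP => [->|_]; last by exists 0%R; lia.
  rewrite /t; case: ifP => _; [exists (-1)%R | exists 1%R]; lia.
Qed.

Lemma lift_walk (V : finType) (e : rel V) :
  simple_graph e -> forall j f f', walk_len (col_adj e) j f f' -> forall h, Lift e f h ->
  exists h', Lift e f' h' /\ (\sum_y absz (h' y - h y) <= 2 * j)%N /\
     (forall y, exists q : int, h' y - h y = 2 * q)%R.
Proof.
move=> Hs; elim=> [|j IH] f f' /=.
  move=> /eqP <- h Hl; exists h; split => //; split.
    by rewrite big1 // => y _; rewrite subrr.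
  by move=> y; exists 0%R; lia.
case/existsP=> z /andP[Hfz Hz] h Hl.
have [h1 [L1 [S1 P1]]] := lift_step Hs Hfz Hl.
have [h2 [L2 [S2 P2]]] := IH _ _ Hz _ L1.
exists h2; split => //; split.
  apply: (@leq_trans (\sum_y (absz (h2 y - h1 y) + absz (h1 y - h y)))).
    apply: leq_sum => y _; lia.
  rewrite big_split /= S1; lia.
move=> y; have [a Ha] := P1 y; have [b Hb] := P2 y; exists (a + b)%R; lia.
Qed.

Lemma lift_unique (V : finType) (e : rel V) g h1 h2 :
  (forall x y, connect e x y) -> Lift e g h1 -> Lift e g h2 ->
  forall x y, (h1 x - h2 x = h1 y - h2 y)%R.
Proof.
move=> Hc [Q1 E1] [Q2 E2] x y.
have [k Hk] := connect_walk (Hc x y).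
elim: k x Hk => [|k IH] x /=; first by move/eqP->.
case/existsP=> z /andP[Hxz Hz]; rewrite -(IH _ Hz).
have [a Ha] := Q1 x; have [b Hb] := Q1 z; have [c Hc'] := Q2 x; have [d Hd] := Q2 z.
have := E1 _ _ Hxz; have := E2 _ _ Hxz; lia.
Qed.
Local Close Scope int_scope.

Lemma S_exists (V : finType) (e : rel V) (d : V -> nat) (s : nat) :
  s <= #|[set y | 2 < d y]| ->
  exists S : {set V}, [/\ S \subset [set y | 2 < d y], #|S| = s &
     forall x y, e x y -> d y = (d x).+1 -> 2 < d x -> y \in S -> x \in S].
Proof.
set R := [set y | 2 < d y] => Hs.
suff H : forall i, i <= #|R| -> exists S : {set V}, [/\ S \subset R, #|S| = #|R| - i &
     forall x y, e x y -> d y = (d x).+1 -> 2 < d x -> y \in S -> x \in S].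
  have [S [H1 H2 H3]] := H (#|R| - s) (leq_subr _ _); exists S; split => //; rewrite H2; lia.
elim=> [|i IH] Hi.
  exists R; split => //; first by rewrite subn0.
  by move=> x y _ _ Hx _; rewrite inE.
have [S [H1 H2 H3]] := IH (ltnW Hi).
have : 0 < #|S| by rewrite H2; lia.
case/card_gt0P => y0 Hy0.
pose ym := [arg max_(y > y0 in S) d y].
have Hym : ym \in S /\ forall z, z \in S -> d z <= d ym.
  rewrite /ym; case: arg_maxnP => // z Hz Hmax; split => //.
exists (S :\ ym); split.
- apply: subset_trans H1; exact: subsetDl.
- have := cardsD1 ym S; rewrite (proj1 Hym) H2; lia.
- move=> x y Hxy Hd Hx; rewrite !in_setD1 => /andP[_ Hy].
  rewrite (H3 _ _ Hxy Hd Hx Hy) andbT.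
  apply/eqP => E; have := (proj2 Hym) _ Hy; rewrite -E; lia.
Qed.

Lemma sum_classes (V : finType) (k : V -> nat) (phi : nat -> nat) :
  (forall y, k y < 4) ->
  \sum_y phi (k y) = phi 0 * #|[set y | k y == 0]| + phi 1 * #|[set y | k y == 1]|
     + phi 2 * #|[set y | k y == 2]| + phi 3 * #|[set y | k y == 3]|.
Proof.
move=> Hk.
have E : forall y, phi (k y) = \sum_(i < 4) (k y == i) * phi i.
  move=> y; rewrite !big_ord_recr big_ord0 /=.
  have := Hk y; case: (k y) => [|[|[|[|?]]]] //= _; lia.
under eq_bigr => y _ do rewrite E.
rewrite exchange_big /= !big_ord_recr big_ord0 /=.
have C : forall i : nat, \sum_y (k y == i) * phi i = phi i * #|[set y | k y == i]|.
  move=> i; rewrite -big_distrl /= mulnC -sum1dep_card.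
  congr (_ * _); rewrite [RHS]big_mkcond; apply: eq_bigr => y _; by case: (k y == i).
rewrite !C; lia.
Qed.

Lemma at_dist_d (V : finType) (e : rel V) (v : V) (d : V -> nat) :
  (forall x, walk_len e (d x) v x) -> (forall x k, walk_len e k v x -> d x <= k) ->
  forall y k, at_dist e v y k = (d y == k).
Proof.
move=> Hw Hmin y k; rewrite /at_dist; apply/idP/eqP.
  case/andP => Hwk /forallP Hf.
  have Hle := Hmin _ _ Hwk.
  apply/eqP; rewrite eqn_leq Hle /= leqNgt; apply/negP => Hlt.
  by have := Hf (Ordinal Hlt); rewrite Hw.
move=> <-; rewrite Hw /=; apply/forallP => j; apply/negP => Hj.
have := Hmin _ _ Hj; have := ltn_ord j; lia.
Qed.

Lemma sumT (V : finType) : \sum_(y : V) 1 = #|V|.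
Proof. by rewrite sum1_card. Qed.

Theorem mainTheorem12 (V : finType) (e : rel V) :
  is_tree e ->
  (exists v : V, is_leaf e v /\ #|Nbhd e 2 v| + 4 <= uphalf #|V|) ->
  diam_ge (fun f : coloring V => proper3 e f) (col_adj e) ((3 * #|V|)./2).+1.
Proof.
move=> Ht [v [Hleaf Hm]].
have Ht' := Ht; case: Ht' => [[Hsym Hirr] [Hc Hcard]].
have [d [Hw Hmin]] := dist_exists (fun x => Hc v x).
have bip := tree_bip Ht Hw Hmin.
have Hd0 := d0 Hw Hmin.
have dv : d v = 0 by apply/eqP; rewrite Hd0.
have HN : Nbhd e 2 v = [set y | d y == 2].
  by apply/setP => y; rewrite !inE (at_dist_d Hw Hmin).
rewrite HN in Hm.
have c0 : #|[set y | d y == 0]| = 1.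
  have -> : [set y | d y == 0] = [set v] by apply/setP => y; rewrite !inE Hd0.
  exact: cards1.
have c1 : #|[set y | d y == 1]| = 1.
  have -> : [set y | d y == 1] = [set y | e v y]; last exact/eqP.
  apply/setP => y; rewrite !inE; apply/eqP/idP.
    move=> E; have := Hw y; rewrite E /= => /existsP [z /andP [H /eqP <-]]; done.
  move=> H; have := d_edge Hw Hmin H; rewrite dv => H1.
  have : y != v by apply: contraTneq H => ->; rewrite Hirr.
  rewrite -Hd0; lia.
set n := #|V| in Hm *.
set m := #|[set y | d y == 2]| in Hm.
set r := #|[set y | 2 < d y]|.
have tot : 1 + 1 + m + r = n.
  have := sum_classes (k := fun y => minn (d y) 3) (fun _ => 1) (fun y => ltac:(lia)).
  rewrite sumT !mul1n.
  have -> : [set y | minn (d y) 3 == 0] = [set y | d y == 0]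
    by apply/setP => y; rewrite !inE; case: (d y) => [|[|[|?]]].
  have -> : [set y | minn (d y) 3 == 1] = [set y | d y == 1]
    by apply/setP => y; rewrite !inE; case: (d y) => [|[|[|?]]].
  have -> : [set y | minn (d y) 3 == 2] = [set y | d y == 2]
    by apply/setP => y; rewrite !inE; case: (d y) => [|[|[|?]]].
  have -> : [set y | minn (d y) 3 == 3] = [set y | 2 < d y]
    by apply/setP => y; rewrite !inE; case: (d y) => [|[|[|?]]].
  rewrite c0 c1 -/m -/r; lia.
pose t := uphalf n - 4.
have [S [HS1 HS2 HS3]] := @S_exists V e d (t - m) ltac:(rewrite /t; lia).
have HS : forall y, y \in S -> 2 < d y.
  by move=> y Hy; have := subsetP HS1 y Hy; rewrite inE.
pose k y := if d y <= 2 then d y else if y \in S then 2 else 3.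
have k3 : forall y, k y <= 3.
  by move=> y; rewrite /k; case: ifP => H; [lia|case: ifP].
have kd : forall y, k y <= d y.
  move=> y; rewrite /k; case: ifP => H; first done; case: ifP => _; lia.
pose hf y := d y + 8 - 2 * k y.
have kmono : forall x y, e x y -> d y = (d x).+1 -> k y = k x \/ k y = (k x).+1.
  move=> x y Hxy Hd; have cl := HS3 x y Hxy Hd.
  case Ex: (d x <= 2); case Ey: (d y <= 2); case Sx: (x \in S); case Sy: (y \in S);
    rewrite /k Ex Ey ?Sx ?Sy; try lia; exfalso; have := cl ltac:(lia) Sy; by rewrite Sx.
have Ehf : forall x y, e x y -> hf y = (hf x).+1 \/ hf x = (hf y).+1.
  move=> x y Hxy; rewrite /hf.
  case: (bip _ _ Hxy) => Hd.
    have := kmono _ _ Hxy Hd; have := k3 x; have := k3 y; lia.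
  rewrite Hsym in Hxy.
  have := kmono _ _ Hxy Hd; have := k3 x; have := k3 y; lia.
have ck0 : #|[set y | k y == 0]| = 1.
  suff -> : [set y | k y == 0] = [set y | d y == 0] by []; apply/setP => y; rewrite !inE /k.
  case Ey: (d y <= 2) => //; case: (y \in S) => /=; symmetry; apply/negbTE/eqP; lia.
have ck1 : #|[set y | k y == 1]| = 1.
  suff -> : [set y | k y == 1] = [set y | d y == 1] by []; apply/setP => y; rewrite !inE /k.
  case Ey: (d y <= 2) => //; case: (y \in S) => /=; symmetry; apply/negbTE/eqP; lia.
have ck2 : #|[set y | k y == 2]| = t.
  have -> : [set y | k y == 2] = [set y | d y == 2] :|: S.
    apply/setP => y; rewrite !inE /k.
    case Ey: (d y <= 2); case Sy: (y \in S); rewrite /= ?orbT ?orbF //.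
      by have := HS _ Sy; lia.
    symmetry; apply/negbTE/eqP; lia.
  rewrite cardsU.
  have -> : [set y | d y == 2] :&: S = set0.
    apply/setP => y; rewrite !inE; case Sy: (y \in S); rewrite ?andbT ?andbF //.
    have := HS _ Sy => H; apply/negbTE/eqP; lia.
  rewrite cards0 HS2 -/m; lia.
have tot2 := sum_classes (k := k) (fun _ => 1) (fun y => ltac:(have := k3 y; lia)).
rewrite sumT !mul1n ck0 ck1 ck2 in tot2.
have k4 : forall y, k y < 4 by move=> y; have := k3 y; lia.
have SC := fun phi => @sum_classes V k phi k4.
have hfE : forall y, hf y = d y + 8 - 2 * k y by [].
have hfv : hf v = 8 by rewrite hfE /k dv.
have Lf := lift_nat Ehf.
have Lg := lift_nat bip.
exists [ffun y => inord (hf y %% 3)], [ffun y => inord (d y %% 3)].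
split; first exact: lift_proper Lf.
split; first exact: lift_proper Lg.
move=> j Hj; apply/negP => Hwalk.
have [h2 [L2 [Ssum Par]]] := lift_walk (conj Hsym Hirr) Hwalk Lf.
have U := lift_unique Hc L2 Lg.
clearbody hf k.
set c := (h2 v - Posz (d v))%R.
have Hh2 : forall y, h2 y = (c + Posz (d y))%R by move=> y; have := U y v; rewrite /c; lia.
have [Q2 _] := L2; have [Qg _] := Lg; have [a Ha] := Q2 v; have [b Hb] := Qg v.
have [q Hq] := Par v.
rewrite hfv in Hq.
have [Hc0|Hc6] : (c <= 0 \/ 6 <= c)%R by rewrite /c; lia.
- have P : forall y, 8 - 2 * k y <= absz (h2 y - Posz (hf y)).
    move=> y; rewrite Hh2 hfE; have := k3 y; have := kd y; lia.
  have H : \sum_y (8 - 2 * k y) <= \sum_y absz (h2 y - Posz (hf y)) by apply: leq_sum => y _; exact: P y.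
  rewrite (SC (fun i => 8 - 2 * i)) ck0 ck1 ck2 in H.
  have := leq_trans H Ssum; rewrite /t; lia.
- have P : forall y, (if k y is 0 then 2 else 2 * k y - 2) <= absz (h2 y - Posz (hf y)).
    move=> y; rewrite Hh2 hfE; have := k3 y; have := kd y.
    case: (k y) => [|kk] /=; lia.
  have H : \sum_y (if k y is 0 then 2 else 2 * k y - 2) <= \sum_y absz (h2 y - Posz (hf y)) by apply: leq_sum => y _; exact: P y.
  rewrite (SC (fun i => if i is 0 then 2 else 2 * i - 2)) ck0 ck1 ck2 /= in H.
  have := leq_trans H Ssum; rewrite /t; lia.
Qed.
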